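(* Let $A\in\mathbb{R}^{r\times n}$ ($r\le n$) have full row rank with thin SVD $A=U\Sigma V$, singular values $\sigma_1\ge\dots\ge\sigma_r>0$, and rows $V_1,\dots,V_r$ of $V$. Let $F\in\mathbb{R}^{K\times n}$ with rows $F_1,\dots,F_K$ satisfy $FA^T\ne0$, and let $\lambda'>0$. Let $D^*=FA^T(AA^T)^{-1}$ and $\tilde D^*=FA^T(AA^T+\lambda'I)^{-1}$. For $M\in\mathbb{R}^{K\times r}$ define $f(M)=\|F-MA\|_F^2$, $\epsilon(M)=f(M)/\|MA\|_F^2+1$, $\alpha(M)=\|M\|_F^2$, $\gamma(M)=\|M\|_F^2\|A\|_F^2/\|MA\|_F^2$. Let $a_i^2=\sum_{k=1}^K(F_kV_i^T)^2$ and $\Omega=\{j: a_j\neq0\}$. Then: (1) $f(\tilde D^* )>f(D^* )$; (2) $\epsilon(\tilde D^* )>\epsilon(D^* )$; (3) $\alpha(\tilde D^* )<\alpha(D^* )$; (4) if the values $\{\sigma_i\}_{i\in\Omega}$ are not all equal (in particular $|\Omega|>1$), then $\gamma(\tilde D^* )<\gamma(D^* )$, and otherwise $\gamma(\tilde D^* )=\gamma(D^* )$.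
   Context: $D^*$ minimizes $\|F-DA\|_F^2$ and $\tilde D^*$ minimizes $\|F-DA\|_F^2+\lambda'\|D\|_F^2$; $f,\epsilon,\alpha,\gamma$ are the absolute fitting error, fitting error, absolute spectral risk and spectral risk. *)

(* Defs.v *)
From HB Require Import structures.
From mathcomp Require Import all_boot all_order all_algebra.
Set Implicit Arguments. Unset Strict Implicit. Unset Printing Implicit Defensive.
Import Order.TTheory GRing.Theory Num.Theory.
Local Open Scope ring_scope.

Definition frob2 {R : realFieldType} {m n : nat} (M : 'M[R]_(m, n)) : R :=
  \sum_(i < m) \sum_(j < n) (M i j) ^+ 2.

Definition Dstar {R : realFieldType} {K r n : nat}
  (F : 'M[R]_(K, n)) (A : 'M[R]_(r, n)) : 'M[R]_(K, r) :=
  F *m A^T *m invmx (A *m A^T).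

Definition Dtilde {R : realFieldType} {K r n : nat}
  (F : 'M[R]_(K, n)) (A : 'M[R]_(r, n)) (lam : R) : 'M[R]_(K, r) :=
  F *m A^T *m invmx (A *m A^T + lam%:M).

Definition abs_fit_err {R : realFieldType} {K r n : nat}
  (F : 'M[R]_(K, n)) (A : 'M[R]_(r, n)) (M : 'M[R]_(K, r)) : R :=
  frob2 (F - M *m A).

Definition fit_err {R : realFieldType} {K r n : nat}
  (F : 'M[R]_(K, n)) (A : 'M[R]_(r, n)) (M : 'M[R]_(K, r)) : R :=
  abs_fit_err F A M / frob2 (M *m A) + 1.

Definition abs_spec_risk {R : realFieldType} {K r : nat} (M : 'M[R]_(K, r)) : R :=
  frob2 M.

Definition spec_risk {R : realFieldType} {K r n : nat}
  (A : 'M[R]_(r, n)) (M : 'M[R]_(K, r)) : R :=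
  frob2 M * frob2 A / frob2 (M *m A).

Definition a2 {R : realFieldType} {K r n : nat}
  (F : 'M[R]_(K, n)) (V : 'M[R]_(r, n)) (i : 'I_r) : R :=
  \sum_(k < K) ((F *m V^T) k i) ^+ 2.

(* Omega = { j | a_j <> 0 }  (a_j <> 0 iff a_j^2 <> 0) *)
Definition Omega {R : realFieldType} {K r n : nat}
  (F : 'M[R]_(K, n)) (V : 'M[R]_(r, n)) : {set 'I_r} :=
  [set j | a2 F V j != 0].

(* Main.v *)
Require Import Defs.
From HB Require Import structures.
From mathcomp Require Import all_boot all_order all_algebra.
From mathcomp Require Import ring lra.
Import Order.TTheory GRing.Theory Num.Theory.
Local Open Scope ring_scope.

Section Frob.
Variable R : realFieldType.

Lemma frob2_tr m n (M : 'M[R]_(m,n)) : frob2 M = \tr (M *m M^T).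
Proof.
rewrite /frob2 /mxtrace; apply: eq_bigr => i _; rewrite mxE.
by apply: eq_bigr => j _; rewrite mxE expr2.
Qed.

Lemma frob2_ge0 m n (M : 'M[R]_(m,n)) : 0 <= frob2 M.
Proof. by rewrite /frob2; apply: sumr_ge0 => i _; apply: sumr_ge0 => j _; exact: sqr_ge0. Qed.

Lemma frob2_eq0 m n (M : 'M[R]_(m,n)) : frob2 M = 0 -> M = 0.
Proof.
move=> H; apply/matrixP => i j; rewrite mxE.
have H1 := psumr_eq0P (fun i _ => sumr_ge0 _ (fun j _ => sqr_ge0 (M i j))) H.
have H2 := psumr_eq0P (fun j _ => sqr_ge0 (M i j)) (H1 i isT).
by apply/eqP; rewrite -sqrf_eq0 (H2 j isT).
Qed.

Lemma frob2_mulUr m k (M : 'M[R]_(m,k)) (U : 'M[R]_k) :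
  U^T *m U = 1%:M -> frob2 (M *m U^T) = frob2 M.
Proof.
by move=> HU; rewrite !frob2_tr trmx_mul trmxK !mulmxA -(mulmxA M) HU mulmx1.
Qed.

Lemma frob2_mulVr m k l (X : 'M[R]_(m,k)) (V : 'M[R]_(k,l)) :
  V *m V^T = 1%:M -> frob2 (X *m V) = frob2 X.
Proof.
by move=> HV; rewrite !frob2_tr trmx_mul !mulmxA -(mulmxA X) HV mulmx1.
Qed.

Lemma frob2D m k (X Y : 'M[R]_(m,k)) :
  frob2 (X + Y) = frob2 X + frob2 Y + 2 * \tr (X *m Y^T).
Proof.
rewrite !frob2_tr linearD /= mulmxDl !mulmxDr !mxtraceD.
have -> : \tr (Y *m X^T) = \tr (X *m Y^T) by rewrite -mxtrace_tr trmx_mul trmxK.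
ring.
Qed.

Lemma frob2_diag m k (G : 'M[R]_(m,k)) (d : 'rV[R]_k) :
  frob2 (G *m diag_mx d) = \sum_i (\sum_l (G l i) ^+ 2) * d 0 i ^+ 2.
Proof.
rewrite /frob2 exchange_big /=; apply: eq_bigr => i _; rewrite big_distrl /=.
by apply: eq_bigr => l _; rewrite mul_mx_diag mxE exprMn.
Qed.


End Frob.

Section Mat.
Variables (R : realFieldType) (r n K : nat) (U : 'M[R]_r) (sigma : 'rV[R]_r)
  (V : 'M[R]_(r, n)) (F : 'M[R]_(K, n)).
Hypotheses (HUtU : U^T *m U = 1%:M) (HUUt : U *m U^T = 1%:M) (HV : V *m V^T = 1%:M).

Definition DD (d : 'I_r -> R) := F *m V^T *m diag_mx (\row_i d i) *m U^T.

Lemma DD_ext f g : f =1 g -> DD f = DD g.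
Proof. by move=> H; rewrite /DD; congr (_ *m diag_mx _ *m _); apply/rowP => i; rewrite !mxE. Qed.

Lemma DA d : DD d *m (U *m diag_mx sigma *m V) =
   F *m V^T *m diag_mx (\row_i (d i * sigma 0 i)) *m V.
Proof.
rewrite /DD !mulmxA -(mulmxA _ U^T U) HUtU mulmx1 -(mulmxA _ (diag_mx _) (diag_mx sigma)) mulmx_diag.
by congr (_ *m diag_mx _ *m _); apply/rowP => i; rewrite !mxE.
Qed.

Lemma alphaD d : frob2 (DD d) = \sum_i a2 F V i * d i ^+ 2.
Proof. by rewrite /DD frob2_mulUr // frob2_diag; apply: eq_bigr => i _; rewrite mxE. Qed.

Lemma normDA d : frob2 (DD d *m (U *m diag_mx sigma *m V)) =
   \sum_i a2 F V i * (d i * sigma 0 i) ^+ 2.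
Proof. by rewrite DA frob2_mulVr // frob2_diag; apply: eq_bigr => i _; rewrite mxE. Qed.

Lemma fitD d : frob2 (F - DD d *m (U *m diag_mx sigma *m V)) =
  frob2 (F - F *m V^T *m V) + \sum_i a2 F V i * (1 - d i * sigma 0 i) ^+ 2.
Proof.
rewrite DA.
have Hd : diag_mx (\row_i (1 - d i * sigma 0 i)) = 1%:M - diag_mx (\row_i (d i * sigma 0 i)) :> 'M[R]_r.
  by apply/matrixP => i j; rewrite !mxE; case: eqP => _; rewrite ?mulr1n ?mulr0n ?subr0.
have -> : F - F *m V^T *m diag_mx (\row_i (d i * sigma 0 i)) *m V =
   (F - F *m V^T *m V) + F *m V^T *m diag_mx (\row_i (1 - d i * sigma 0 i)) *m V.
  by rewrite Hd mulmxBr mulmx1 mulmxBl addrA subrK.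
rewrite frob2D.
have -> : \tr ((F - F *m V^T *m V) *m (F *m V^T *m diag_mx (\row_i (1 - d i * sigma 0 i)) *m V)^T) = 0.
  by rewrite trmx_mul mulmxA mulmxBl -(mulmxA _ V V^T) HV mulmx1 subrr mul0mx mxtrace0.
rewrite mulr0 addr0 frob2_mulVr // frob2_diag; congr (_ + _).
by apply: eq_bigr => i _; rewrite !mxE.
Qed.

Lemma AAt : (U *m diag_mx sigma *m V) *m (U *m diag_mx sigma *m V)^T =
  U *m diag_mx (\row_i (sigma 0 i * sigma 0 i)) *m U^T.
Proof.
rewrite !trmx_mul tr_diag_mx !mulmxA -(mulmxA _ V V^T) HV mulmx1.
by rewrite -(mulmxA _ (diag_mx sigma) (diag_mx sigma)) mulmx_diag.
Qed.

Lemma FAt : F *m (U *m diag_mx sigma *m V)^T = F *m V^T *m diag_mx sigma *m U^T.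
Proof. by rewrite !trmx_mul tr_diag_mx !mulmxA. Qed.

Lemma invE (e : 'rV[R]_r) : (forall i, e 0 i != 0) ->
  invmx (U *m diag_mx e *m U^T) = U *m diag_mx (\row_i (e 0 i)^-1) *m U^T.
Proof.
move=> He.
have H : (U *m diag_mx e *m U^T) *m (U *m diag_mx (\row_i (e 0 i)^-1) *m U^T) = 1%:M.
  rewrite !mulmxA -(mulmxA _ U^T U) HUtU mulmx1 -(mulmxA U) mulmx_diag.
  have -> : \row_j (e 0 j * (\row_i (e 0 i)^-1) 0 j) = const_mx 1 :> 'rV[R]_r.
    by apply/rowP => j; rewrite !mxE mulfV.
  by rewrite diag_const_mx mulmx1.
have [Hu _] := mulmx1_unit H.
by rewrite -[LHS]mulmx1 -H mulKmx.
Qed.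

Lemma Dgen (w : 'rV[R]_r) :
  F *m (U *m diag_mx sigma *m V)^T *m (U *m diag_mx w *m U^T) =
  DD (fun i => sigma 0 i * w 0 i).
Proof.
rewrite FAt /DD !mulmxA -(mulmxA _ U^T U) HUtU mulmx1.
by rewrite -(mulmxA _ (diag_mx sigma) (diag_mx w)) mulmx_diag.
Qed.

Hypothesis Hs : forall i, sigma 0 i != 0.

Lemma DstarE : Dstar F (U *m diag_mx sigma *m V) =
  DD (fun i => sigma 0 i * (sigma 0 i * sigma 0 i)^-1).
Proof.
rewrite /Dstar AAt invE ?Dgen; last by move=> i; rewrite mxE mulf_neq0.
by apply: DD_ext => i; rewrite !mxE.
Qed.

Lemma DtildeE lam : 0 < lam -> Dtilde F (U *m diag_mx sigma *m V) lam =
  DD (fun i => sigma 0 i * (sigma 0 i * sigma 0 i + lam)^-1).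
Proof.
move=> Hl.
rewrite /Dtilde AAt.
have -> : U *m diag_mx (\row_i (sigma 0 i * sigma 0 i)) *m U^T + lam%:M =
   U *m diag_mx (\row_i (sigma 0 i * sigma 0 i + lam)) *m U^T.
  have -> : diag_mx (\row_i (sigma 0 i * sigma 0 i + lam)) =
            diag_mx (\row_i (sigma 0 i * sigma 0 i)) + lam%:M :> 'M[R]_r.
    by apply/matrixP => i j; rewrite !mxE -mulrnDl.
  by rewrite mulmxDr mulmxDl mul_mx_scalar -scalemxAl HUUt scalemx1.
rewrite invE ?Dgen; last first.
  move=> i; rewrite mxE; have := sqr_ge0 (sigma 0 i); rewrite expr2 => h.
  by apply/eqP => h2; lra.
by apply: DD_ext => i; rewrite !mxE.
Qed.

End Mat.
Lemma sum_gt0 (R : realFieldType) k (f : 'I_k -> R) j : (forall i, 0 <= f i) -> 0 < f j -> 0 < \sum_i f i.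
Proof.
move=> H Hj; rewrite (bigD1 j) //=.
have : 0 <= \sum_(i | i != j) f i by apply: sumr_ge0.
lra.
Qed.

Definition dS {R : realFieldType} {k} (x : 'I_k -> R) i := x i * (x i * x i)^-1.
Definition dT {R : realFieldType} {k} (x : 'I_k -> R) (lam : R) i := x i * (x i * x i + lam)^-1.

Section Scal.
Variables (R : realFieldType) (k : nat) (a x : 'I_k -> R) (lam E N : R).
Hypotheses (Ha : forall i, 0 <= a i) (Hx : forall i, 0 < x i) (Hl : 0 < lam)
  (HE : 0 <= E) (HN : 0 < N) (Hj : exists j, a j != 0).

Lemma xx_gt0 i : 0 < x i * x i.
Proof. have Hl' := Hl; have HE' := HE; have HN' := HN. by apply: mulr_gt0. Qed.

Lemma cT_gt0 i : 0 < dT x lam i * x i.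
Proof. have Hl' := Hl; have HE' := HE; have HN' := HN.
rewrite /dT mulrAC; apply: mulr_gt0; first exact: xx_gt0.
by rewrite invr_gt0 addr_gt0 // xx_gt0.
Qed.

Lemma cT_lt1 i : dT x lam i * x i < 1.
Proof. have Hl' := Hl; have HE' := HE; have HN' := HN.
have h1 := xx_gt0 i.
have -> : dT x lam i * x i = 1 - lam / (x i * x i + lam).
  rewrite /dT; field; apply/eqP => h; lra.
have : 0 < lam / (x i * x i + lam) by apply: divr_gt0 => //; lra.
lra.
Qed.

Lemma nz_lem i : (x i * x i + lam != 0) && (x i != 0).
Proof. have Hl' := Hl.
by rewrite (gt_eqF (Hx i)) andbT; have h := xx_gt0 i; apply/eqP => h2; lra. Qed.

Lemma cS1 i : dS x i * x i = 1.
Proof. have Hl' := Hl; have HE' := HE; have HN' := HN. have h1 := xx_gt0 i; rewrite /dS; field; rewrite gt_eqF // Hx. Qed.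

Lemma sumS : \sum_i a i * (dS x i * x i) ^+ 2 = \sum_i a i.
Proof. have Hl' := Hl; have HE' := HE; have HN' := HN. by apply: eq_bigr => i _; rewrite cS1 expr1n mulr1. Qed.

Lemma P_gt0 : 0 < \sum_i a i.
Proof. have Hl' := Hl; have HE' := HE; have HN' := HN.
case: Hj => j hj; apply: (@sum_gt0 _ _ _ j) => //.
by rewrite lt0r hj Ha.
Qed.

Lemma nT_gt0 : 0 < \sum_i a i * (dT x lam i * x i) ^+ 2.
Proof. have Hl' := Hl; have HE' := HE; have HN' := HN.
case: Hj => j hj; apply: (@sum_gt0 _ _ _ j).
  by move=> i; apply: mulr_ge0 => //; apply: sqr_ge0.
apply: mulr_gt0; first by rewrite lt0r hj Ha.
by apply: exprn_gt0; apply: cT_gt0.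
Qed.

Lemma nT_le : \sum_i a i * (dT x lam i * x i) ^+ 2 <= \sum_i a i.
Proof. have Hl' := Hl; have HE' := HE; have HN' := HN.
apply: ler_sum => i _.
have h1 := cT_gt0 i; have h2 := cT_lt1 i; have h3 := Ha i.
rewrite expr2.
have h4 : dT x lam i * x i * (dT x lam i * x i) <= 1 by nra.
nra.
Qed.

Lemma fit_pos : 0 < \sum_i a i * (1 - dT x lam i * x i) ^+ 2.
Proof. have Hl' := Hl; have HE' := HE; have HN' := HN.
case: Hj => j hj; apply: (@sum_gt0 _ _ _ j).
  by move=> i; apply: mulr_ge0 => //; apply: sqr_ge0.
apply: mulr_gt0; first by rewrite lt0r hj Ha.
by apply: exprn_gt0; have := cT_lt1 j; lra.
Qed.

Lemma fit0 : \sum_i a i * (1 - dS x i * x i) ^+ 2 = 0.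
Proof. have Hl' := Hl; have HE' := HE; have HN' := HN. by apply: big1 => i _; rewrite cS1 subrr expr0n mulr0. Qed.

Lemma part1 : E + \sum_i a i * (1 - dS x i * x i) ^+ 2 < E + \sum_i a i * (1 - dT x lam i * x i) ^+ 2.
Proof. have Hl' := Hl; have HE' := HE; have HN' := HN. by rewrite fit0; have := fit_pos; lra. Qed.

Lemma part2 :
  (E + \sum_i a i * (1 - dS x i * x i) ^+ 2) / \sum_i a i * (dS x i * x i) ^+ 2 + 1 <
  (E + \sum_i a i * (1 - dT x lam i * x i) ^+ 2) / \sum_i a i * (dT x lam i * x i) ^+ 2 + 1.
Proof. have Hl' := Hl; have HE' := HE; have HN' := HN.
rewrite fit0 addr0 sumS.
set P := \sum_i a i; set nT := \sum_i _ * _ ^+ 2; set fT := \sum_i _ * _ ^+ 2.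
have hP : 0 < P by apply: P_gt0.
have hT : 0 < nT by apply: nT_gt0.
have hle : nT <= P by apply: nT_le.
have hf : 0 < fT by apply: fit_pos.
rewrite -subr_gt0.
have -> : (E + fT) / nT + 1 - (E / P + 1) = ((E + fT) * P - E * nT) / (nT * P).
  by field; rewrite ?(gt_eqF hT) ?(gt_eqF hP).
apply: divr_gt0; last by apply: mulr_gt0.
nra.
Qed.

Lemma part3 : \sum_i a i * dT x lam i ^+ 2 < \sum_i a i * dS x i ^+ 2.
Proof. have Hl' := Hl; have HE' := HE; have HN' := HN.
rewrite -subr_gt0 -sumrB.
case: Hj => j hj; apply: (@sum_gt0 _ _ _ j) => [i|].
  have h1 := xx_gt0 i.
  have -> : a i * dS x i ^+ 2 - a i * dT x lam i ^+ 2 =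
     a i * (lam * (2 * (x i * x i) + lam) / ((x i * x i) * (x i * x i + lam) ^+ 2)).
    by rewrite /dS /dT; field; exact: nz_lem.
  apply: mulr_ge0 => //; apply: divr_ge0; first by apply: mulr_ge0; lra.
  by apply: mulr_ge0; [lra | apply: sqr_ge0].
have h1 := xx_gt0 j.
have -> : a j * dS x j ^+ 2 - a j * dT x lam j ^+ 2 =
   a j * (lam * (2 * (x j * x j) + lam) / ((x j * x j) * (x j * x j + lam) ^+ 2)).
  by rewrite /dS /dT; field; exact: nz_lem.
apply: mulr_gt0; first by rewrite lt0r hj Ha.
apply: divr_gt0; first by apply: mulr_gt0; lra.
by apply: mulr_gt0; [lra | apply: exprn_gt0; lra].
Qed.


Lemma nz2 i : (x i * x i + lam != 0).
Proof. by have /andP[] := nz_lem i. Qed.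

Lemma eT : \sum_i a i * dT x lam i ^+ 2 = \sum_i a i * (dS x i ^+ 2 * (dT x lam i * x i) ^+ 2).
Proof.
apply: eq_bigr => i _; congr (_ * _); rewrite /dS /dT; field; exact: nz_lem.
Qed.

Definition Q i j := a i * a j * ((dS x i ^+ 2 - dS x j ^+ 2) *
   ((dT x lam j * x j) ^+ 2 - (dT x lam i * x i) ^+ 2)).

Lemma Tsum : \sum_i \sum_j Q i j = 2 * ((\sum_i a i * dS x i ^+ 2) * (\sum_i a i * (dT x lam i * x i) ^+ 2)
   - (\sum_i a i * dT x lam i ^+ 2) * (\sum_i a i)).
Proof.
have e1 : (\sum_i a i * dS x i ^+ 2) * (\sum_i a i * (dT x lam i * x i) ^+ 2)
   - (\sum_i a i * dT x lam i ^+ 2) * (\sum_i a i) =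
   \sum_i \sum_j (a i * a j * dS x i ^+ 2 * ((dT x lam j * x j) ^+ 2 - (dT x lam i * x i) ^+ 2)).
  rewrite eT !big_distrl /= -sumrB; apply: eq_bigr => i _.
  by rewrite !big_distrr /= -sumrB; apply: eq_bigr => j _; ring.
rewrite e1.
have e2 : \sum_i \sum_j Q i j =
   \sum_i \sum_j (a i * a j * dS x i ^+ 2 * ((dT x lam j * x j) ^+ 2 - (dT x lam i * x i) ^+ 2)) +
   \sum_i \sum_j (a j * a i * dS x j ^+ 2 * ((dT x lam i * x i) ^+ 2 - (dT x lam j * x j) ^+ 2)).
  rewrite -big_split; apply: eq_bigr => i _; rewrite -big_split; apply: eq_bigr => j _.
  by rewrite /Q /=; ring.
rewrite e2 [X in _ + X]exchange_big /=.
ring.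
Qed.

Lemma Q_eq i j : (dS x i ^+ 2 - dS x j ^+ 2) * ((dT x lam j * x j) ^+ 2 - (dT x lam i * x i) ^+ 2) =
  (x j * x j - x i * x i) ^+ 2 * lam * (x i * x i / (x i * x i + lam) + x j * x j / (x j * x j + lam))
  / ((x i * x i) * (x j * x j) * (x i * x i + lam) * (x j * x j + lam)).
Proof.
rewrite /dS /dT; field.
by rewrite ?nz2 ?(gt_eqF (Hx i)) ?(gt_eqF (Hx j)).
Qed.

Lemma frac_ge0 i : 0 <= x i * x i / (x i * x i + lam).
Proof. have Hl' := Hl.
have h := xx_gt0 i; apply: divr_ge0; lra.
Qed.

Lemma Q_ge0 i j : 0 <= Q i j.
Proof. have Hl' := Hl.
rewrite /Q Q_eq; apply: mulr_ge0; first by apply: mulr_ge0.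
have hi := xx_gt0 i; have hj := xx_gt0 j.
apply: divr_ge0.
  apply: mulr_ge0; first by apply: mulr_ge0; [apply: sqr_ge0 | lra].
  by apply: addr_ge0; apply: frac_ge0.
by apply: mulr_ge0; [apply: mulr_ge0; [apply: mulr_ge0|]|]; lra.
Qed.

Lemma Q_gt0 i j : a i != 0 -> a j != 0 -> x i != x j -> 0 < Q i j.
Proof. have Hl' := Hl.
move=> hai haj hx.
have hd : x j * x j - x i * x i != 0.
  apply/eqP => h.
  have : (x j - x i) * (x j + x i) = 0 by rewrite -h; ring.
  move/eqP; rewrite mulf_eq0 => /orP [] /eqP h2.
    by move: hx; rewrite (subr0_eq h2) eqxx.
  by have := Hx i; have := Hx j; lra.
rewrite /Q Q_eq; apply: mulr_gt0; first by apply: mulr_gt0; rewrite lt0r ?hai ?haj Ha.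
have hi := xx_gt0 i; have hj := xx_gt0 j.
apply: divr_gt0.
  apply: mulr_gt0; first by apply: mulr_gt0 => //; rewrite lt0r sqrf_eq0 hd sqr_ge0.
  have := frac_ge0 i.
  have : 0 < x j * x j / (x j * x j + lam) by apply: divr_gt0; lra.
  lra.
by apply: mulr_gt0; [apply: mulr_gt0; [apply: mulr_gt0|]|]; lra.
Qed.

Lemma part4a : (exists i j, [/\ a i != 0, a j != 0 & x i != x j]) ->
  (\sum_i a i * dT x lam i ^+ 2) * N / (\sum_i a i * (dT x lam i * x i) ^+ 2) <
  (\sum_i a i * dS x i ^+ 2) * N / (\sum_i a i * (dS x i * x i) ^+ 2).
Proof. have HN' := HN.
move=> [i0 [j0 [hi hj hx]]].
have hT : 0 < \sum_i \sum_j Q i j.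
  apply: (@sum_gt0 _ _ _ i0) => [i|]; first by apply: sumr_ge0 => j _; apply: Q_ge0.
  apply: (@sum_gt0 _ _ _ j0) => [j|]; first by apply: Q_ge0.
  exact: Q_gt0.
move: hT; rewrite Tsum sumS.
have hP := P_gt0; have hnT := nT_gt0.
set P := \sum_i a i; set nT := \sum_i a i * (dT x lam i * x i) ^+ 2.
set aS := \sum_i a i * dS x i ^+ 2; set aT := \sum_i a i * dT x lam i ^+ 2.
move=> hT; rewrite -subr_gt0.
have -> : aS * N / P - aT * N / nT = N * (aS * nT - aT * P) / (P * nT).
  by field; rewrite (gt_eqF hnT) (gt_eqF hP).
apply: divr_gt0; last by apply: mulr_gt0.
apply: mulr_gt0 => //; lra.
Qed.

Lemma part4b : (forall i j, a i != 0 -> a j != 0 -> x i = x j) ->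
  (\sum_i a i * dT x lam i ^+ 2) * N / (\sum_i a i * (dT x lam i * x i) ^+ 2) =
  (\sum_i a i * dS x i ^+ 2) * N / (\sum_i a i * (dS x i * x i) ^+ 2).
Proof. have HN' := HN.
move=> H.
have hT : \sum_i \sum_j Q i j = 0.
  apply: big1 => i _; apply: big1 => j _.
  have [hi|hi] := eqVneq (a i) 0; first by rewrite /Q hi !mul0r.
  have [hj|hj] := eqVneq (a j) 0; first by rewrite /Q hj mulr0 !mul0r.
  by rewrite /Q /dS /dT (H i j hi hj) !subrr mul0r mulr0.
move: hT; rewrite Tsum sumS.
have hP := P_gt0; have hnT := nT_gt0.
set P := \sum_i a i; set nT := \sum_i a i * (dT x lam i * x i) ^+ 2.
set aS := \sum_i a i * dS x i ^+ 2; set aT := \sum_i a i * dT x lam i ^+ 2.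
move=> hT; apply/eqP; rewrite -subr_eq0; apply/eqP.
have -> : aT * N / nT - aS * N / P = - (N * (aS * nT - aT * P) / (P * nT)).
  by field; rewrite (gt_eqF hnT) (gt_eqF hP).
have -> : aS * nT - aT * P = 0 by lra.
by rewrite mulr0 mul0r oppr0.
Qed.

End Scal.

Theorem theorem8 (R : realFieldType) (r n K : nat)
  (A : 'M[R]_(r, n)) (U : 'M[R]_r) (sigma : 'rV[R]_r) (V : 'M[R]_(r, n))
  (F : 'M[R]_(K, n)) (lam : R) :
  (r <= n)%N ->
  \rank A = r ->
  (* thin SVD A = U Sigma V *)
  U^T *m U = 1%:M -> U *m U^T = 1%:M ->
  V *m V^T = 1%:M ->
  A = U *m diag_mx sigma *m V ->
  (forall i j : 'I_r, (i <= j)%N -> sigma 0 j <= sigma 0 i) ->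
  (forall i : 'I_r, 0 < sigma 0 i) ->
  F *m A^T != 0 ->
  0 < lam ->
  [/\ abs_fit_err F A (Dtilde F A lam) > abs_fit_err F A (Dstar F A),
      fit_err F A (Dtilde F A lam) > fit_err F A (Dstar F A),
      abs_spec_risk (Dtilde F A lam) < abs_spec_risk (Dstar F A)
    & ((exists i j, [/\ i \in Omega F V, j \in Omega F V & sigma 0 i != sigma 0 j]) ->
         spec_risk A (Dtilde F A lam) < spec_risk A (Dstar F A))
      /\ ((forall i j, i \in Omega F V -> j \in Omega F V -> sigma 0 i = sigma 0 j) ->
         spec_risk A (Dtilde F A lam) = spec_risk A (Dstar F A))].
Proof.
move=> _ _ HUtU HUUt HV HA _ Hpos HFA Hl.
subst A.
have Hs : forall i, sigma 0 i != 0 by move=> i; rewrite (gt_eqF (Hpos i)).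
have Ha : forall i, 0 <= a2 F V i.
  by move=> i; apply: sumr_ge0 => k _; apply: sqr_ge0.
have HE : 0 <= frob2 (F - F *m V^T *m V) by apply: frob2_ge0.
have HN : 0 < frob2 (U *m diag_mx sigma *m V).
  rewrite lt0r frob2_ge0 andbT; apply/eqP => h.
  by move: HFA; rewrite (@frob2_eq0 _ _ _ _ h) trmx0 mulmx0 eqxx.
have Hj : exists j, a2 F V j != 0.
  have : ~~ [forall j, a2 F V j == 0].
    apply/negP => /forallP H; move: HFA; rewrite FAt //.
    have -> : F *m V^T = 0.
      apply/matrixP => k j; rewrite [RHS]mxE.
      have := @psumr_eq0P _ _ _ _ (fun k _ => sqr_ge0 ((F *m V^T) k j)) (eqP (H j)) k isT.
      by move/eqP; rewrite sqrf_eq0 => /eqP.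
    by rewrite !mul0mx eqxx.
  by move/forallPn => [j hj]; exists j.
have -> := @DstarE _ _ _ _ U sigma V F HUtU HUUt HV Hs.
have -> := @DtildeE _ _ _ _ U sigma V F HUtU HUUt HV lam Hl.
rewrite /fit_err /abs_fit_err /abs_spec_risk /spec_risk.
pose d1 := fun i : 'I_r => sigma 0 i * (sigma 0 i * sigma 0 i)^-1.
pose d2 := fun i : 'I_r => sigma 0 i * (sigma 0 i * sigma 0 i + lam)^-1.
have -> := @fitD _ _ _ _ U sigma V F HUtU HV d1.
have -> := @fitD _ _ _ _ U sigma V F HUtU HV d2.
have -> := @normDA _ _ _ _ U sigma V F HUtU HV d1.
have -> := @normDA _ _ _ _ U sigma V F HUtU HV d2.
have -> := @alphaD _ _ _ _ U V F HUtU d1.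
have -> := @alphaD _ _ _ _ U V F HUtU d2.
split.
- by apply: (@part1 _ _ (a2 F V) (fun i => sigma 0 i) lam (frob2 (F - F *m V^T *m V)) (frob2 (U *m diag_mx sigma *m V))).
- by apply: (@part2 _ _ (a2 F V) (fun i => sigma 0 i) lam (frob2 (F - F *m V^T *m V)) (frob2 (U *m diag_mx sigma *m V))).
- by apply: (@part3 _ _ (a2 F V) (fun i => sigma 0 i) lam (frob2 (F - F *m V^T *m V)) (frob2 (U *m diag_mx sigma *m V))).
split.
- move=> [i [j [hi hj hx]]].
  apply: (@part4a _ _ (a2 F V) (fun i => sigma 0 i) lam (frob2 (F - F *m V^T *m V)) (frob2 (U *m diag_mx sigma *m V))) => //.
  by exists i, j; move: hi hj; rewrite !inE => hi hj; split.
- move=> H.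
  apply: (@part4b _ _ (a2 F V) (fun i => sigma 0 i) lam (frob2 (F - F *m V^T *m V)) (frob2 (U *m diag_mx sigma *m V))) => //.
  by move=> i j hi hj; apply: H; rewrite inE.
Qed.
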